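(* For any simple undirected graph $G$ with $n$ vertices, $$\Phi_2=\sum_{\{st,uv\}\in Q}(k_s+k_t)(k_u+k_v)=\frac12\sum_{st\in E}(k_s+k_t)\Big(n\langle k^2\rangle-(\xi(s)+\xi(t))-k_s(k_s-1)-k_t(k_t-1)\Big).$$
   Context: $k_x$ is the degree of $x$, $\langle k^2\rangle=\frac1n\sum_x k_x^2$, $\xi(s)=\sum_{t\in\Gamma(s)}k_t$ is the sum of the degrees of the neighbours of $s$. $Q$ is the set of unordered pairs $\{st,uv\}$ of edges with $s,t,u,v$ pairwise distinct. *)

(* Defs.v *)
From HB Require Import structures.
From mathcomp Require Import all_boot all_order all_algebra.
Set Implicit Arguments. Unset Strict Implicit. Unset Printing Implicit Defensive.
Import Order.TTheory GRing.Theory Num.Theory.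

Definition simple_graph (T : finType) (e : rel T) : Prop :=
  symmetric e /\ irreflexive e.

Section Graph.
Variables (T : finType) (e : rel T).

Definition deg (x : T) : nat := #|[set y | e x y]|.

Definition edges : {set {set T}} :=
  [set A : {set T} | [exists s, exists t, e s t && (A == [set s; t])]].

Definition Qpairs : {set {set {set T}}} :=
  [set P : {set {set T}} | [exists s, exists t, exists u, exists v,
     [&& e s t, e u v,
         [&& s != t, s != u, s != v, t != u, t != v & u != v] &
         P == [set [set s; t]; [set u; v]]]]].

Local Open Scope ring_scope.

Definition kR (x : T) : rat := (deg x)%:R.

Definition mean_k2 : rat := (#|T|%:R)^-1 * \sum_(x : T) kR x ^+ 2.

Definition xi (s : T) : rat := \sum_(t in [set y | e s y]) kR t.

Definition edge_deg_sum (A : {set T}) : rat := \sum_(x in A) kR x.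

Definition Phi2 : rat := \sum_(P in Qpairs) \prod_(A in P) edge_deg_sum A.

Definition rhs_term (A : {set T}) : rat :=
  edge_deg_sum A *
  (#|T|%:R * mean_k2 - \sum_(x in A) xi x - \sum_(x in A) kR x * (kR x - 1)).

End Graph.

(* Main.v *)
Require Import Defs.
From mathcomp Require Import all_boot all_order all_algebra.
From mathcomp Require Import ring.
Import Order.TTheory GRing.Theory Num.Theory.
Local Open Scope ring_scope.

Lemma sum_fiber (X Y : finType) (D : pred X) (S : pred Y) (g : X -> Y) (c : nat)
  (F : Y -> rat) :
  (forall x, D x -> S (g x)) ->
  (forall y, S y -> #|[pred x | D x && (g x == y)]| = c) ->
  \sum_(x | D x) F (g x) = c%:R * \sum_(y | S y) F y.
Proof.
move=> DS Hc; rewrite (partition_big g S) //= mulr_sumr.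
apply: eq_bigr => y Sy.
rewrite (eq_bigr (fun _ => F y)); last by move=> x /andP[_ /eqP->].
by rewrite sumr_const -(Hc y Sy) mulr_natl.
Qed.

Lemma set2_eq (T : finType) (a b c d : T) : c != d ->
  [set a; b] = [set c; d] -> (a = c /\ b = d) \/ (a = d /\ b = c).
Proof.
move=> ncd E.
have ha : a \in [set c; d] by rewrite -E !inE eqxx.
have hb : b \in [set c; d] by rewrite -E !inE eqxx orbT.
have hc : c \in [set a; b] by rewrite E !inE eqxx.
have hd : d \in [set a; b] by rewrite E !inE eqxx orbT.
move: ha hb hc hd; rewrite !inE.
case/orP=> /eqP ->; case/orP=> /eqP -> //=; rewrite ?eqxx ?orbb /=.
- by move=> _ /eqP E'; rewrite E' eqxx in ncd.
- by left.
- by right.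
- by move=> /eqP E'; rewrite E' eqxx in ncd.
Qed.

Lemma sum_set2 (T : finType) (s t : T) (F : T -> rat) : s != t ->
  \sum_(x in [set s; t]) F x = F s + F t.
Proof.
by move=> nst; rewrite big_setU1 ?big_set1 // inE.
Qed.

Lemma sum_ind (I : finType) (P : pred I) (F : I -> rat) :
  \sum_(i | P i) F i = \sum_i (P i)%:R * F i.
Proof.
rewrite big_mkcond /=; apply: eq_bigr => i _.
by case: (P i); rewrite ?mul1r ?mul0r.
Qed.

Lemma edges_sum (T : finType) (e : rel T) (He : simple_graph e) (f : {set T} -> rat) :
  \sum_(A in edges e) f A = 2%:R^-1 * \sum_s \sum_t (e s t)%:R * f [set s; t].
Proof.
case: He => esym eirr.
have H : \sum_(p | e p.1 p.2) f [set p.1; p.2] = 2%:R * \sum_(A in edges e) f A.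
  apply: sum_fiber.
    move=> p Dp; rewrite inE; apply/existsP; exists p.1; apply/existsP; exists p.2.
    by rewrite Dp eqxx.
  move=> y; rewrite inE => /existsP[s /existsP[t /andP[est /eqP ->]]].
  have nst : s != t by apply: contraTneq est => ->; rewrite eirr.
  have nst2 : (s, t) != (t, s) by rewrite xpair_eqE negb_and nst.
  rewrite (_ : 2 = #|[set (s, t); (t, s)]|)%N; last by rewrite cards2 nst2.
  apply: eq_card => -[a b]; rewrite !inE /=.
  apply/idP/idP.
    case/andP=> eab /eqP /(@set2_eq _ _ _ _ _ nst) [[-> ->]|[-> ->]]; by rewrite eqxx ?orbT.
  by case/orP=> /eqP [-> ->]; rewrite ?est ?(esym t s) ?est // setUC eqxx.
rewrite -[\sum_(A in edges e) f A]mul1r -(@mulVf _ 2%:R) // -mulrA -H; congr (_ * _).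
rewrite pair_big /= sum_ind; apply: eq_bigr => p _ //.
Qed.

Lemma disj2 (T : finType) (s t u v : T) :
  [disjoint [set s; t] & [set u; v]] = [&& s != u, s != v, t != u & t != v].
Proof.
apply/idP/idP.
  move=> D.
  have hs := disjointFr D (x := s); have ht := disjointFr D (x := t).
  move: hs ht; rewrite !inE !eqxx orbT /= => /(_ isT) /norP[-> ->] /(_ isT) /norP[-> ->].
  by [].
case/and4P=> su sv tu tv; apply/pred0P => x /=; rewrite !inE.
apply/negP => /andP[/orP[]/eqP-> /orP[]/eqP E].
all: by move: su sv tu tv; rewrite E eqxx.
Qed.

Lemma edgesP (T : finType) (e : rel T) (A : {set T}) :
  A \in edges e -> exists s t, e s t /\ A = [set s; t].
Proof.
by rewrite inE => /existsP[s /existsP[t /andP[est /eqP ->]]]; exists s, t.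
Qed.

Lemma Phi2_pairs (T : finType) (e : rel T) (He : simple_graph e) :
  2%:R * Phi2 e = \sum_(A in edges e) \sum_(B in edges e | [disjoint A & B])
     edge_deg_sum e A * edge_deg_sum e B.
Proof.
case: He => esym eirr.
have neq_of_e : forall a b, e a b -> a != b.
  by move=> a b eab; apply: contraTneq eab => ->; rewrite eirr.
set D := fun p : {set T} * {set T} =>
  [&& p.1 \in edges e, p.2 \in edges e & [disjoint p.1 & p.2]].
have H : \sum_(p | D p) (fun P => \prod_(A in P) edge_deg_sum e A) [set p.1; p.2]
   = 2%:R * Phi2 e.
  apply: sum_fiber.
    move=> [A B]; rewrite /D /= => /and3P[/edgesP[s [t [est ->]]] /edgesP[u [v [euv ->]]]].
    rewrite disj2 => /and4P[su sv tu tv].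
    rewrite inE; apply/existsP; exists s; apply/existsP; exists t.
    apply/existsP; exists u; apply/existsP; exists v.
    by rewrite est euv su sv tu tv !neq_of_e //=.
  move=> y; rewrite inE => /existsP[s /existsP[t /existsP[u /existsP[v]]]].
  case/and4P=> est euv /and5P[st su sv tu /andP[tv uv]] /eqP ->.
  have dA : [disjoint [set s; t] & [set u; v]] by rewrite disj2 su sv tu tv.
  have nAB : [set s; t] != [set u; v].
    by apply: contraTneq dA => ->; rewrite disj2 eqxx.
  have nst2 : ([set s; t], [set u; v]) != ([set u; v], [set s; t]).
    by rewrite xpair_eqE negb_and nAB.
  have eA : [set s; t] \in edges e.
    by rewrite inE; apply/existsP; exists s; apply/existsP; exists t; rewrite est eqxx.
  have eB : [set u; v] \in edges e.
    by rewrite inE; apply/existsP; exists u; apply/existsP; exists v; rewrite euv eqxx.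
  rewrite (_ : 2 = #|[set ([set s; t], [set u; v]); ([set u; v], [set s; t])]|)%N;
    last by rewrite cards2 nst2.
  apply: eq_card => -[A B]; rewrite !inE /D /=.
  apply/idP/idP.
    case/andP=> _ /eqP /(@set2_eq _ _ _ _ _ nAB) [[-> ->]|[-> ->]]; by rewrite eqxx ?orbT.
  case/orP=> /eqP [-> ->]; rewrite eA eB ?dA ?(disjoint_sym [set u; v]) ?dA //=.
  by apply/eqP/setP => x; rewrite !inE orbC.
rewrite -H pair_big_dep /=; apply: eq_bigr => -[A B] /and3P[/edgesP[s [t [est ->]]] _ dAB] /=.
have nAB : [set s; t] != B.
  by apply: contraTneq dAB => <-; rewrite disj2 !eqxx.
by rewrite big_setU1 ?big_set1 // inE.
Qed.

Lemma kR_sum (T : finType) (e : rel T) x : kR e x = \sum_v (e x v)%:R.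
Proof.
rewrite /kR /deg -sum1_card natr_sum sum_ind; apply: eq_bigr => v _.
by rewrite inE mulr1.
Qed.

Lemma xi_sum (T : finType) (e : rel T) s : xi e s = \sum_v (e s v)%:R * kR e v.
Proof.
rewrite /xi sum_ind; apply: eq_bigr => v _; by rewrite inE.
Qed.

Lemma sum_pick (T : finType) (s : T) (G : T -> rat) :
  \sum_v (v == s)%:R * G v = G s.
Proof. by rewrite -sum_ind big_pred1_eq. Qed.

Lemma sum_pickr (T : finType) (s : T) (G : T -> rat) :
  \sum_v G v * (v == s)%:R = G s.
Proof.
by rewrite -[RHS](@sum_pick _ s G); apply: eq_bigr => v _; rewrite mulrC.
Qed.

Lemma sum_sym (T : finType) (e : rel T) (esym : symmetric e) (G : T -> T -> rat) :
  \sum_u \sum_v (e u v)%:R * G u v = \sum_u \sum_v (e u v)%:R * G v u.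
Proof.
rewrite exchange_big; apply: eq_bigr => u _; apply: eq_bigr => v _.
by rewrite esym.
Qed.

Lemma inner_vertex (T : finType) (e : rel T) (He : simple_graph e) (s t : T) :
  e s t ->
  \sum_u \sum_v (e u v)%:R *
     ((1 - ((u == s)%:R + (u == t)%:R)) * (1 - ((v == s)%:R + (v == t)%:R)))
     * (kR e u + kR e v) =
  2%:R * (\sum_x kR e x ^+ 2 - (xi e s + xi e t)
     - (kR e s * (kR e s - 1) + kR e t * (kR e t - 1))).
Proof.
case: He => esym eirr est.
set c := fun x : T => 1 - ((x == s)%:R + (x == t)%:R) : rat.
set k := kR e.
have inner : forall u, \sum_v (e u v)%:R * c v = k u - (e u s)%:R - (e u t)%:R.
  move=> u; rewrite /c.
  under eq_bigr => v _ do rewrite mulrBr mulr1 mulrDr.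
  rewrite sumrB big_split /= /k kR_sum.
  by rewrite !sum_pickr opprD addrA.
have step1 : \sum_u \sum_v (e u v)%:R * (c u * c v) * (k u + k v) =
   2%:R * \sum_u c u * k u * (k u - (e u s)%:R - (e u t)%:R).
  rewrite (eq_bigr (fun u => \sum_v (e u v)%:R * (c u * c v * k u)
                         + \sum_v (e u v)%:R * (c v * c u * k v))); last first.
    move=> u _; rewrite -big_split /=; apply: eq_bigr => v _.
    ring.
  rewrite big_split /= [X in _ + X]sum_sym //.
  have -> : \sum_u c u * k u * (k u - (e u s)%:R - (e u t)%:R) =
            \sum_u \sum_v (e u v)%:R * (c u * c v * k u).
    apply: eq_bigr => u _; rewrite -inner mulr_sumr; apply: eq_bigr => v _; ring.
  ring.
rewrite step1; congr (_ * _).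
rewrite (eq_bigr (fun u => k u ^+ 2 - k u * (e u s)%:R - k u * (e u t)%:R
   - (u == s)%:R * (k u * (k u - (e u s)%:R - (e u t)%:R))
   - (u == t)%:R * (k u * (k u - (e u s)%:R - (e u t)%:R)))); last first.
  by move=> u _; rewrite /c; ring.
rewrite !sumrB !sum_pick !xi_sum.
have xs : forall w, \sum_u k u * (e u w)%:R = \sum_v (e w v)%:R * kR e v.
  by move=> w; apply: eq_bigr => u _; rewrite mulrC esym.
rewrite !xs !eirr (esym t s) est /k /=; ring.
Qed.

Lemma ind_na (T : finType) (s t x : T) : s != t ->
  ((s != x) && (t != x))%:R = 1 - ((x == s)%:R + (x == t)%:R) :> rat.
Proof.
move=> nst; rewrite !(eq_sym s x) !(eq_sym t x).
have [xs|xs] := eqVneq x s.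
  by subst x; rewrite (negbTE nst) /=; ring.
have [xt|xt] := eqVneq x t.
  by subst x; rewrite /=; ring.
by rewrite /=; ring.
Qed.

Lemma inner_edges (T : finType) (e : rel T) (He : simple_graph e) (s t : T) :
  e s t ->
  \sum_(B in edges e | [disjoint [set s; t] & B]) edge_deg_sum e B =
  \sum_x kR e x ^+ 2 - (xi e s + xi e t)
     - (kR e s * (kR e s - 1) + kR e t * (kR e t - 1)).
Proof.
move=> est; have He' := He; case: He' => esym eirr.
have neq_of_e : forall a b, e a b -> a != b.
  by move=> a b eab; apply: contraTneq eab => ->; rewrite eirr.
have nst := neq_of_e _ _ est.
rewrite big_mkcondr /=.
rewrite (eq_bigr (fun B : {set T} => [disjoint [set s; t] & B]%:R * edge_deg_sum e B)); last first.
  by move=> B _; case: ifP; rewrite ?mul1r ?mul0r.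
rewrite edges_sum //.
rewrite (eq_bigr (fun u => \sum_v (e u v)%:R *
     ((1 - ((u == s)%:R + (u == t)%:R)) * (1 - ((v == s)%:R + (v == t)%:R)))
     * (kR e u + kR e v))); last first.
  move=> u _; apply: eq_bigr => v _.
  case euv: (e u v); last by rewrite !mul0r.
  rewrite /edge_deg_sum sum_set2 ?neq_of_e // disj2 -!ind_na //.
  rewrite mulrA; congr (_ * _ * _).
  by case: (s != u) (t != u) (s != v) (t != v) => [] [] [] []; rewrite /= ?mul1r ?mul0r ?mulr0.
rewrite inner_vertex // mulrA mulVf ?mul1r //.
Qed.

Theorem proposition8 (T : finType) (e : rel T) (He : simple_graph e) :
  Phi2 e = 2%:R^-1 * \sum_(A in edges e) rhs_term e A.
Proof.
have He' := He; case: He' => esym eirr.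
have mk2 : #|T|%:R * mean_k2 e = \sum_x kR e x ^+ 2.
  rewrite /mean_k2; have [n0|npos] := eqVneq #|T| 0%N.
    rewrite n0 mul0r; symmetry; apply: big1 => x _.
    by move: (card0_eq n0 x); rewrite !inE.
  by rewrite mulrA mulfV ?mul1r // pnatr_eq0.
have n2 : (2%:R : rat) != 0 by rewrite pnatr_eq0.
apply: (mulfI n2); rewrite Phi2_pairs // mulrA mulfV // mul1r.
apply: eq_bigr => A /edgesP [s [t [est ->]]].
have nst : s != t by apply: contraTneq est => ->; rewrite eirr.
rewrite -mulr_sumr inner_edges // /rhs_term mk2 !sum_set2 //.
Qed.
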